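(* Every tree $T$ with at least two vertices contains a vertex $r$ such that the components $B_1,\dots,B_m$ of $T-r$ can be partitioned into two classes $\mathcal{C}_1$ and $\mathcal{C}_2$ such that for both $j\in\{1,2\}$, $$\sum_{B_i\in\mathcal{C}_j}|V(B_i)\cap \mathrm{Even}_T(r)| + \sum_{B_i\notin\mathcal{C}_j}|V(B_i)\cap\mathrm{Odd}_T(r)| \le \left(\frac23-\frac{1}{3\Delta(T)}\right)|T|+\frac12.$$
   Context: For a vertex $v$ of a tree $T$, $\mathrm{Even}_T(v)$ is the set of vertices at even distance from $v$ in $T$, excluding $v$ itself, and $\mathrm{Odd}_T(v)$ is the set of vertices at odd distance from $v$. $|T|$ is the number of vertices and $\Delta(T)$ the maximum degree. *)

(* Defs.v *)
From HB Require Import structures.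
From mathcomp Require Import all_boot all_order all_algebra.
Set Implicit Arguments. Unset Strict Implicit. Unset Printing Implicit Defensive.
Import Order.TTheory GRing.Theory Num.Theory.

(* A simple graph on a finite vertex type V is a symmetric irreflexive
   relation e. *)
Section Graphs.
Variable V : finType.
Variable e : rel V.

Definition has_cycle : Prop :=
  exists c : seq V, [/\ 2 < size c, uniq c & cycle e c].

Definition is_tree : Prop :=
  [/\ symmetric e, irreflexive e, (forall x y, connect e x y) & ~ has_cycle].

Fixpoint ball (x : V) (n : nat) : {set V} :=
  if n is n'.+1 then ball x n' :|: [set y | [exists z in ball x n', e z y]]
  else [set x].

(* Graph distance: least n with y in ball x n (distances in a connected
   graph are < #|V|; unreachable vertices would get #|V|). *)
Definition dist (x y : V) : nat := find (fun n => y \in ball x n) (iota 0 #|V|).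

Definition Even (v : V) : {set V} := [set u | (u != v) && ~~ odd (dist v u)].
Definition Odd (v : V) : {set V} := [set u | odd (dist v u)].

Definition maxdeg : nat := \max_(v : V) #|[set u | e v u]|.

Definition del_rel (r : V) : rel V := [rel x y | [&& e x y, x != r & y != r]].

Definition comps (r : V) : {set {set V}} :=
  [set [set y | connect (del_rel r) x y] | x in [set~ r]].

Definition class_weight (r : V) (C : {set {set V}}) : nat :=
  \sum_(B in C) #|B :&: Even r| + \sum_(B in comps r :\: C) #|B :&: Odd r|.

End Graphs.

(* Main.v *)
Require Import Defs.
From HB Require Import structures.
From mathcomp Require Import all_boot all_order all_algebra.
From mathcomp Require Import zify ring lra.
Set Implicit Arguments. Unset Strict Implicit. Unset Printing Implicit Defensive.
Import Order.TTheory GRing.Theory Num.Theory.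
Local Open Scope ring_scope.

Lemma subset_sum (T : finType) (f : T -> rat) (lo : rat) (S : {set T}) :
  0 < lo -> (forall x, x \in S -> f x < lo) -> lo <= \sum_(x in S) f x ->
  exists2 C : {set T}, C \subset S & (lo <= \sum_(x in C) f x) && (\sum_(x in C) f x < lo *+ 2).
Proof.
move=> Hlo Hf.
have: forall n (S : {set T}), (#|S| < n)%N -> (forall x, x \in S -> f x < lo) ->
  lo <= \sum_(x in S) f x ->
  exists2 C : {set T}, C \subset S & (lo <= \sum_(x in C) f x) && (\sum_(x in C) f x < lo *+ 2).
  elim => [|n IH] S' //.
  move=> Hc Hf' Hs.
  case: (set_0Vmem S') => [Hz|[x Hx]].
    by move: Hs; rewrite Hz big_set0 => Hs; have := lt_le_trans Hlo Hs; rewrite ltxx.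
  case: (lerP lo (\sum_(y in S' :\ x) f y)) => Hlt.
    have Hc' : (#|S' :\ x| < n)%N.
      by move: Hc; rewrite (cardsD1 x S') Hx add1n ltnS.
    have [C HC HCs] := IH (S' :\ x) Hc' (fun y Hy => Hf' y (subsetP (subD1set S' x) y Hy)) Hlt.
    by exists C => //; apply: subset_trans HC (subD1set S' x).
  exists S' => //; rewrite Hs /= (big_setD1 x Hx) /=.
  have := Hf' x Hx; rewrite mulr2n; lra.
by move=> H; apply: (H #|S|.+1).
Qed.

Local Close Scope ring_scope.

Section Tree.
Variable V : finType.
Variable e : rel V.
Hypothesis esym : symmetric e.
Hypothesis eirr : irreflexive e.
Hypothesis econn : forall x y, connect e x y.
Hypothesis enocyc : ~ has_cycle e.

Lemma ballP x n y :
  reflect (exists p, [/\ path e x p, last x p = y & size p <= n]) (y \in ball e x n).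
Proof.
apply: (iffP idP).
  elim: n y => [|n IH] y /=.
    by rewrite inE => /eqP ->; exists [::].
  rewrite inE => /orP[/IH [p [Hp Hl Hs]]|].
    by exists p; split => //; apply: leqW.
  rewrite inE => /existsP [z /andP [/IH [p [Hp Hl Hs]] Hzy]].
  exists (rcons p y); split.
  - by rewrite rcons_path Hp Hl.
  - by rewrite last_rcons.
  - by rewrite size_rcons.
elim: n y => [|n IH] y /= [p [Hp Hl Hs]].
  by move: Hs; rewrite leqn0 => /nilP Hp0; subst p; rewrite inE -Hl.
rewrite inE; case: (leqP (size p) n) => Hsn.
  by rewrite IH //; exists p.
have Hsz : size p = n.+1 by apply/eqP; rewrite eqn_leq Hs Hsn.
apply/orP; right; rewrite inE.
clear Hs Hsn; move: Hp Hl Hsz; case/lastP: p => [|p z] //.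
rewrite rcons_path last_rcons size_rcons => /andP [Hp Hz] Hl [Hsz]; subst z.
apply/existsP; exists (last x p); rewrite Hz andbT.
by apply: IH; exists p; rewrite Hsz.
Qed.

Lemma dist_le x y k : y \in ball e x k -> k < #|V| -> dist e x y <= k.
Proof.
move=> Hy Hk; rewrite /dist.
case: (leqP (find (fun n => y \in ball e x n) (iota 0 #|V|)) k) => // Hlt.
have := before_find 0 Hlt.
by rewrite nth_iota // add0n Hy.
Qed.

Lemma dist_in x y k : y \in ball e x k -> k < #|V| -> y \in ball e x (dist e x y).
Proof.
move=> Hy Hk.
have Hh : has (fun n => y \in ball e x n) (iota 0 #|V|).
  by apply/hasP; exists k => //; rewrite mem_iota.
have := nth_find 0 Hh.
rewrite nth_iota ?add0n //.
by move: Hh; rewrite has_find size_iota.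
Qed.

Lemma short_walk x y : exists p, [/\ path e x p, last x p = y & size p < #|V|].
Proof.
have /connectP [p Hp ->] := econn x y.
case: (shortenP Hp) => p' Hp' Hu _.
exists p'; split => //.
have := max_card (mem (x :: p')).
by move/card_uniqP: Hu => ->.
Qed.

Lemma walk_dist x p : path e x p -> dist e x (last x p) <= size p.
Proof.
move=> Hp.
case: (ltnP (size p) #|V|) => Hs.
  by apply: dist_le => //; apply/ballP; exists p; split.
have [q [Hq Hl Hs']] := short_walk x (last x p).
have H1 : dist e x (last x p) <= size q.
  by apply: dist_le => //; apply/ballP; exists q; split.
by apply: leq_trans H1 _; apply: ltnW; apply: leq_trans Hs' Hs.
Qed.

Lemma dist_walk x y : exists p, [/\ path e x p, last x p = y & size p = dist e x y].
Proof.
have [q [Hq Hl Hs]] := short_walk x y.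
have Hb : y \in ball e x (size q) by apply/ballP; exists q; split.
have /ballP [p [Hp Hlp Hsp]] := dist_in Hb Hs.
exists p; split => //; apply/eqP; rewrite eqn_leq Hsp.
by rewrite -Hlp walk_dist.
Qed.

Lemma dist_xx x : dist e x x = 0.
Proof.
have Hc : 0 < #|V| by apply/card_gt0P; exists x.
have Hb : x \in ball e x 0 by rewrite /= inE.
by apply/eqP; rewrite -leqn0; apply: dist_le.
Qed.

Lemma dist_edge x y : e x y -> dist e x y = 1.
Proof.
move=> Hxy; apply/eqP; rewrite eqn_leq.
have -> : dist e x y <= 1 by have := walk_dist (p := [:: y]) (x := x); rewrite /= Hxy; apply.
have [p [Hp Hl Hs]] := dist_walk x y.
rewrite lt0n -Hs; apply/negP => /nilP Hp0; subst p.
by simpl in Hl; subst y; rewrite eirr in Hxy.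
Qed.


Lemma del_sym w : symmetric (del_rel e w).
Proof. move=> x y; rewrite /del_rel /= esym; case: (e y x) => //=; apply: andbC. Qed.

Lemma del_relE w x y : del_rel e w x y = [&& e x y, x != w & y != w].
Proof. by []. Qed.

Lemma del_sub w : subrel (del_rel e w) e.
Proof. by move=> x y /= /andP []. Qed.

Lemma del_path w x p : path e x p -> w \notin x :: p -> path (del_rel e w) x p.
Proof.
elim: p x => [|y p IH] x //= /andP [Hxy Hp].
rewrite !inE negb_or => /andP [Hx Hyp]; rewrite del_relE Hxy eq_sym Hx.
move: Hyp; rewrite negb_or => /andP [Hy Hp']; rewrite eq_sym Hy /=.
by apply: IH => //; rewrite inE negb_or Hy.
Qed.

Lemma del_path_inv w x p : path (del_rel e w) x p -> w \notin p.
Proof.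
elim: p x => [|y p IH] x //= /andP []; rewrite del_relE => /and3P [_ _ Hy] Hp.
by rewrite inE negb_or eq_sym Hy (IH y).
Qed.

Lemma del_connect_neq w x y : connect (del_rel e w) x y -> x != w -> y != w.
Proof.
move=> /connectP [p Hp ->] Hx.
have := mem_last x p; rewrite inE => /orP [/eqP -> //|Hl].
by apply: contraNneq (del_path_inv Hp) => <-.
Qed.

Lemma suffix_last w x p : path e x p -> w \in x :: p ->
  exists q, [/\ path e w q, last w q = last x p, w \notin q, {subset q <= p} & size q <= size p].
Proof.
elim: p x => [|y p IH] x /=.
  by move=> _; rewrite inE => /eqP ->; exists [::]; split.
move=> /andP [Hxy Hp] Hw.
case Hwp: (w \in y :: p).
  have [q [Hq Hl Hn Hs Hsz]] := IH y Hp Hwp.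
  exists q; split => //; last by apply: leqW.
  by move=> z /Hs Hz; rewrite inE Hz orbT.
move: Hw; rewrite inE Hwp orbF => /eqP Hw; subst w.
by exists (y :: p); split => //=; rewrite ?Hxy // Hwp.
Qed.

Lemma nocyc_nbrs v c1 c2 : e v c1 -> e v c2 -> c1 != c2 -> ~~ connect (del_rel e v) c1 c2.
Proof.
move=> H1 H2 Hne; apply/negP => /connectP [p Hp Hl].
case: (shortenP Hp) Hl => p' Hp' Hu Hsub Hl.
apply: enocyc; exists (v :: c1 :: p'); split.
- case: p' Hl {Hp' Hu Hsub} => [|z p'] /= Hl; last by [].
  by rewrite Hl eqxx in Hne.
- rewrite /= -/(uniq (c1 :: p')) Hu andbT inE negb_or.
  have Hv1 : v != c1 by apply: contraTneq H1 => ->; rewrite eirr.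
  rewrite Hv1 /=; apply/negP => Hvp.
  by have := del_path_inv Hp'; rewrite Hvp.
- rewrite /cycle /= rcons_path H1 (sub_path (@del_sub v) Hp') /=.
  by rewrite -Hl esym.
Qed.

Lemma dist_branch v c u : e v c -> connect (del_rel e v) c u ->
  dist e v u = (dist e c u).+1.
Proof.
move=> Hvc Hcu; apply/eqP; rewrite eqn_leq; apply/andP; split.
  have [p [Hp Hl Hs]] := dist_walk c u.
  by have := walk_dist (x := v) (p := c :: p); rewrite /= Hvc Hp Hl Hs; apply.
have [p [Hp Hl Hs]] := dist_walk v u.
have [q [Hq Hlq Hn Hsub Hsz]] := suffix_last Hp (mem_head v p).
have Hcv : c != v by apply: contraTneq Hvc => ->; rewrite eirr.
have Huv : u != v by apply: del_connect_neq Hcu Hcv.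
case: q Hq Hlq Hn Hsub Hsz => [|c' q] /=.
  by move=> _ Hl'; rewrite Hl' Hl eqxx in Huv.
move=> /andP [Hvc' Hq] Hlq; rewrite inE negb_or => /andP [Hvc'2 Hvq] _ Hsz.
have Hc'u : connect (del_rel e v) c' u.
  apply/connectP; exists q; last by rewrite Hlq Hl.
  by apply: del_path => //; rewrite inE negb_or Hvc'2.
have Hcc' : c = c'.
  apply/eqP; apply/negPn/negP => Hne.
  have Hcc : connect (del_rel e v) c c'.
    apply: connect_trans Hcu _.
    by by rewrite (sym_connect_sym (@del_sym v)).
  by have := nocyc_nbrs Hvc Hvc' Hne; rewrite Hcc.
subst c'.
have := walk_dist Hq; rewrite Hlq Hl -Hs => H.
by apply: leq_ltn_trans H Hsz.
Qed.

Lemma branch_dich v c u : e v c ->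
  connect (del_rel e v) c u || connect (del_rel e c) v u.
Proof.
move=> Hvc.
have /connectP [p Hp Hl] := econn v u.
have [q [Hq Hlq Hn Hsub Hsz]] := suffix_last Hp (mem_head v p).
have Hcv : c != v by apply: contraTneq Hvc => ->; rewrite eirr.
case Hcq: (c \in q).
  have Hcq' : c \in v :: q by rewrite inE Hcq orbT.
  have [q' [Hq' Hlq' Hn' Hsub' _]] := suffix_last Hq Hcq'.
  apply/orP; left; apply/connectP; exists q'; last by rewrite Hlq' Hlq.
  apply: del_path => //; rewrite inE negb_or eq_sym Hcv /=.
  by apply: contra Hn => /Hsub'.
apply/orP; right; apply/connectP; exists q; last by rewrite Hlq.
by apply: del_path => //; rewrite inE negb_or Hcq Hcv.
Qed.


Lemma parity_edge v c u : e v c -> odd (dist e v u) = ~~ odd (dist e c u).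
Proof.
move=> Hvc; case/orP: (branch_dich u Hvc) => H.
  by rewrite (dist_branch Hvc H).
have Hcv : e c v by rewrite esym.
by rewrite (dist_branch Hcv H) /= negbK.
Qed.

Lemma parity_walk u x p : path e x p ->
  odd (dist e (last x p) u) = odd (dist e x u) (+) odd (size p).
Proof.
elim: p x => [|y p IH] x /=; first by rewrite addbF.
move=> /andP [Hxy Hp]; rewrite IH // (parity_edge u Hxy).
by case: (odd (dist e y u)); case: (odd (size p)).
Qed.

Lemma parity_global rho r u :
  odd (dist e r u) = odd (dist e rho r) (+) odd (dist e rho u).
Proof.
have /connectP [p Hp Hl] := econn rho r.
have H1 := parity_walk r Hp; have H2 := parity_walk u Hp.
rewrite -Hl dist_xx /= in H1; rewrite -Hl in H2.
rewrite H2; move: H1; case: (odd (dist e rho r)); case: (odd (size p)) => //= _.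
all: by case: (odd (dist e rho u)).
Qed.

Lemma col_edge rho v c : e v c -> odd (dist e rho v) != odd (dist e rho c).
Proof.
move=> Hvc; have := parity_global rho v c; rewrite dist_edge //=.
by case: (odd (dist e rho v)); case: (odd (dist e rho c)).
Qed.

Definition comp r x := [set y | connect (del_rel e r) x y].

Lemma compsP r B : reflect (exists2 x, x != r & B = comp r x) (B \in comps e r).
Proof.
apply: (iffP imsetP) => [[x Hx ->]|[x Hx ->]]; exists x => //.
  by move: Hx; rewrite in_setC1.
by rewrite in_setC1.
Qed.

Lemma comp_self r x : x \in comp r x.
Proof. by rewrite inE connect0. Qed.

Lemma comp_eq r x y : y \in comp r x -> comp r y = comp r x.
Proof.
rewrite inE => Hxy; apply/setP => z; rewrite !inE; apply/idP/idP => H.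
  exact: connect_trans Hxy H.
apply: connect_trans H.
by rewrite (sym_connect_sym (@del_sym r)).
Qed.

Lemma comp_notin r x : x != r -> r \notin comp r x.
Proof.
move=> Hx; rewrite inE; apply/negP => H.
by have := del_connect_neq H Hx; rewrite eqxx.
Qed.

Lemma comps_eq r B y : B \in comps e r -> y \in B -> B = comp r y.
Proof. by move=> /compsP [x Hx ->] Hy; rewrite (comp_eq Hy). Qed.

Lemma comps_notin r B : B \in comps e r -> r \notin B.
Proof. by move=> /compsP [x Hx ->]; apply: comp_notin. Qed.

Lemma comps_triv r : trivIset (comps e r).
Proof.
apply/trivIsetP => A B HA HB Hne.
rewrite -setI_eq0; apply/eqP/setP => y; rewrite !inE.
apply/negP => /andP [HyA HyB].
by rewrite (comps_eq HA HyA) (comps_eq HB HyB) eqxx in Hne.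
Qed.

Lemma cover_comps r : cover (comps e r) = [set~ r].
Proof.
apply/setP => y; rewrite in_setC1; apply/bigcupP/idP.
  move=> [B HB HyB]; apply: contraTneq HyB => ->.
  exact: comps_notin HB.
move=> Hy; exists (comp r y); last exact: comp_self.
by apply/compsP; exists y.
Qed.

Lemma comps_nbr r B : B \in comps e r -> exists2 c, c \in B & e r c.
Proof.
move=> /compsP [x Hx ->].
have /connectP [p Hp Hl] := econn r x.
have [q [Hq Hlq Hn _ _]] := suffix_last Hp (mem_head r p).
case: q Hq Hlq Hn => [|c q] /=.
  by move=> _ Hl'; rewrite Hl -Hl' eqxx in Hx.
move=> /andP [Hrc Hq] Hlq; rewrite inE negb_or => /andP [Hrc2 Hrq].
exists c => //; rewrite inE (sym_connect_sym (@del_sym r)).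
apply/connectP; exists q; last by rewrite Hlq Hl.
by apply: del_path => //; rewrite inE negb_or Hrc2.
Qed.

Lemma cover_sub v c : e v c ->
  cover [set B' in comps e c | v \notin B'] = comp v c :\ c.
Proof.
move=> Hvc; have Hcv : e c v by rewrite esym.
apply/setP => y; rewrite !inE; apply/bigcupP/idP.
  move=> [B']; rewrite inE => /andP [HB' HvB'] HyB'.
  have HcB' := comps_notin HB'.
  rewrite (comps_eq HB' HyB') in HvB' HcB'.
  have Hyc : y != c by apply: contraNneq HcB' => ->; apply: comp_self.
  rewrite Hyc /=; case/orP: (branch_dich y Hvc) => // H.
  by move: HvB'; rewrite inE (sym_connect_sym (@del_sym c)) H.
move=> /andP [Hyc Hy]; exists (comp c y).
  rewrite inE; apply/andP; split; first by apply/compsP; exists y.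
  rewrite inE; apply/negP => H.
  rewrite (sym_connect_sym (@del_sym c)) in H.
  have H1 := dist_branch Hvc Hy; have H2 := dist_branch Hcv H.
  by move: H1; rewrite H2 => /eqP; rewrite -addn2 -{1}(addn0 (dist e v y)) eqn_add2l.
exact: comp_self.
Qed.


Lemma parent_ex rho u : u != rho -> exists z, e z u && (dist e rho z < dist e rho u).
Proof.
move=> Hu; have [p [Hp Hl Hs]] := dist_walk rho u.
move: Hp Hl Hs; case/lastP: p => [|p y].
  by move=> _ /= Hl; rewrite Hl eqxx in Hu.
rewrite rcons_path last_rcons size_rcons => /andP [Hp Hy] Hl Hs; subst y.
exists (last rho p); rewrite Hy /= -Hs ltnS.
exact: walk_dist.
Qed.

Definition par rho u := odflt u [pick z | e z u && (dist e rho z < dist e rho u)].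

Lemma par_spec rho u : u != rho -> e (par rho u) u && (dist e rho (par rho u) < dist e rho u).
Proof.
move=> Hu; rewrite /par; case: pickP => [z Hz //|H].
by have [z Hz] := parent_ex Hu; rewrite H in Hz.
Qed.

Lemma deg_count rho (k : bool) :
  #|V|.-1 <= #|[set u | odd (dist e rho u) == k]| * maxdeg e.
Proof.
set col := fun u => odd (dist e rho u).
set Z := [set u | col u == k].
pose f u := if col u == k then (u, par rho u) else (par rho u, u).
pose P := [set pr : V * V | (col pr.1 == k) && e pr.1 pr.2].
have Hsub : f @: [set~ rho] \subset P.
  apply/subsetP => pr /imsetP [u]; rewrite in_setC1 => Hu ->.
  have /andP [He _] := par_spec Hu.
  rewrite /f inE; case: ifP => Hc /=; first by rewrite Hc esym.
  rewrite He andbT.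
  have Hb : forall a b c : bool, a != b -> (b == c) = false -> a == c by do 3 case.
  by apply: Hb Hc; apply: (col_edge rho He).
have Hinj : {in [set~ rho] &, injective f}.
  move=> u1 u2; rewrite !in_setC1 => H1 H2.
  have /andP [_ L1] := par_spec H1; have /andP [_ L2] := par_spec H2.
  rewrite /f; case: ifP => C1; case: ifP => C2 [] E1 E2 //.
    rewrite E2 in L1; rewrite -E1 in L2.
    by have := ltn_trans L1 L2; rewrite ltnn.
  rewrite E1 in L1; rewrite -E2 in L2.
  by have := ltn_trans L1 L2; rewrite ltnn.
have HcP : #|P| = \sum_(z | col z == k) #|[set u | e z u]|.
  rewrite -sum1_card.
  rewrite (eq_bigl (fun pr : V * V => (col pr.1 == k) && e pr.1 pr.2)); last first.
    by move=> pr; rewrite inE.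
  rewrite -(pair_big_dep (fun z => col z == k) (fun z u => e z u) (fun _ _ => 1)) /=.
  by apply: eq_bigr => z _; rewrite sum1_card cardsE.
have H1 : #|V|.-1 <= #|P|.
  have Hc : #|[set~ rho]| = #|V|.-1 by rewrite cardsC1.
  by rewrite -Hc -(card_in_imset Hinj); apply: subset_leq_card.
apply: leq_trans H1 _; rewrite HcP.
have -> : #|Z| * maxdeg e = \sum_(z | col z == k) maxdeg e.
  by rewrite sum_nat_const cardsE.
apply: leq_sum => z _; exact: (@leq_bigmax _ (fun v => #|[set u | e v u]|) z).
Qed.


Local Open Scope ring_scope.

Section Main.
Variable col : V -> bool.
Hypothesis Hcol : forall r u, odd (dist e r u) = col r (+) col u.

Definition wt u : rat := if col u then 1 else -1.
Definition gs (A : {set V}) : rat := \sum_(u in A) wt u.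
Definition sg r : rat := if col r then 1 else -1.

Lemma EvenE r : Even e r = [set u | (u != r) && (col u == col r)].
Proof. by apply/setP => u; rewrite !inE Hcol; case: (col r); case: (col u). Qed.

Lemma OddE r : Odd e r = [set u | col u != col r].
Proof. by apply/setP => u; rewrite !inE Hcol; case: (col r); case: (col u). Qed.

Lemma col_nbr v c : e v c -> col v != col c.
Proof.
move=> Hvc; have := Hcol v c; rewrite dist_edge //=.
by case: (col v); case: (col c).
Qed.

Lemma card_sum (A S : {set V}) : (#|A :&: S|%:R : rat) = \sum_(u in A) (u \in S)%:R.
Proof.
rewrite (big_setID S) /= [X in _ + X]big1 ?addr0; last first.
  by move=> u; rewrite inE => /andP [/negbTE -> _].
rewrite (eq_bigr (fun _ => 1)); last by move=> u; rewrite inE => /andP [_ ->].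
by rewrite sumr_const.
Qed.

Lemma gsE A : gs A = #|A :&: [set u | col u]|%:R - #|A :\: [set u | col u]|%:R.
Proof.
rewrite setDE !card_sum /gs -sumrB; apply: eq_bigr => u _.
by rewrite /wt !inE; case: (col u); rewrite /= ?subr0 ?sub0r.
Qed.

Lemma gs_cover Q : trivIset Q -> \sum_(B in Q) gs B = gs (cover Q).
Proof. by move=> HQ; rewrite /gs big_trivIset. Qed.

Lemma comp_split r B : B \in comps e r ->
  (#|B :&: Even e r|%:R : rat) = #|B :&: Odd e r|%:R + sg r * gs B.
Proof.
move=> HB; rewrite !card_sum /gs mulr_sumr -big_split; apply: eq_bigr => u Hu.
have Hur : u != r by apply: contraTneq Hu => ->; apply: comps_notin HB.
rewrite EvenE OddE !inE Hur /= /sg /wt.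
by case: (col r); case: (col u); rewrite /= ?mulr1 ?mulrN1 ?opprK ?add0r ?addr0 ?addrN.
Qed.

Lemma sum_odd r : \sum_(B in comps e r) (#|B :&: Odd e r|%:R : rat) = #|Odd e r|%:R.
Proof.
rewrite (eq_bigr (fun B : {set V} => \sum_(u in B) ((u \in Odd e r)%:R : rat))); last first.
  by move=> B _; rewrite card_sum.
rewrite -big_trivIset ?comps_triv // cover_comps -card_sum.
have Hsub : Odd e r \subset [set~ r].
  by apply/subsetP => u; rewrite OddE in_setC1 !inE; apply: contraNneq => ->.
by rewrite (setIidPr Hsub).
Qed.

Lemma cw_formula r (C : {set {set V}}) : C \subset comps e r ->
  (class_weight e r C)%:R = #|Odd e r|%:R + sg r * \sum_(B in C) gs B.
Proof.
move=> HC; rewrite /class_weight natrD !natr_sum.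
rewrite (eq_bigr (fun B => #|B :&: Odd e r|%:R + sg r * gs B)); last first.
  by move=> B HB; apply: comp_split; apply: (subsetP HC).
rewrite big_split /= -mulr_sumr -(sum_odd r) (big_setID C (A := comps e r)) /=.
rewrite (setIidPr HC); ring.
Qed.

Lemma gs_compl r : \sum_(B in comps e r) gs B =
   #|[set u | col u]|%:R - #|~: [set u | col u]|%:R - wt r.
Proof.
rewrite gs_cover ?comps_triv // cover_comps.
have : gs setT = wt r + gs [set~ r].
  by rewrite /gs (big_setD1 r (in_setT r)) /= setTD.
rewrite gsE setTI setTD => ->; ring.
Qed.

Lemma odd_card r : (#|Odd e r|%:R : rat) =
  if col r then #|~: [set u | col u]|%:R else #|[set u | col u]|%:R.
Proof.
rewrite OddE; case Hr: (col r); congr (_%:R); apply: eq_card => u; rewrite !inE ?Hr;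
  by case: (col u).
Qed.

Lemma main_core (bound : rat)
  (HB1 : #|~: [set u | col u]|%:R <= bound)
  (HB2 : #|[set u | col u]|%:R + #|V|%:R - 1 <= 3%:R * bound)
  (Hbig : (#|~: [set u | col u]| <= #|[set u | col u]|)%N) (Hn : (0 < #|V|)%N) :
  exists r : V, exists C1 : {set {set V}},
    C1 \subset comps e r /\
    ((class_weight e r C1)%:R <= bound) /\
    ((class_weight e r (comps e r :\: C1))%:R <= bound).
Proof.
set X := [set u | col u].
set n : rat := #|V|%:R.
set a : rat := #|X|%:R.
set b : rat := #|~: X|%:R.
have Hab : a + b = n by rewrite /a /b -natrD cardsC.
have Hba : b <= a by rewrite ler_nat.
pose lo v : rat := a - bound - (col v)%:R.
pose W : rat := 2%:R * bound - n + 1.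
pose Pd (p : V * {set {set V}}) :=
  (p.2 \subset comps e p.1) && (lo p.1 <= \sum_(B in p.2) gs B).
have [rho _] : exists rho : V, true.
  by have /card_gt0P [x _] := Hn; exists x.
have Hp0 : Pd (rho, comps e rho).
  rewrite /Pd /= subxx /= gs_compl -/X -/a -/b /lo /wt.
  by case: (col rho) => /=; lra.
case: (@arg_minnP _ (rho, comps e rho) Pd (fun p => #|cover p.2|) Hp0) => [[v Q]].
rewrite /Pd /= => /andP [HQ Hlo] Hmin.
have Hsmall : forall B, B \in Q -> gs B < lo v.
  move=> B HB; rewrite ltNge; apply/negP => HlB.
  have HBc : B \in comps e v := subsetP HQ B HB.
  have [c HcB Hvc] := comps_nbr HBc.
  have HBeq : B = comp v c := comps_eq HBc HcB.
  set Q' := [set B' in comps e c | v \notin B'].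
  have HQ' : Q' \subset comps e c by apply/subsetP => B'; rewrite inE => /andP [].
  have Hcov : cover Q' = B :\ c by rewrite HBeq cover_sub.
  have Hsum : \sum_(B' in Q') gs B' = gs B - wt c.
    rewrite gs_cover ?(trivIsetS HQ' (comps_triv c)) // Hcov /gs.
    by rewrite [in RHS](big_setD1 c HcB) /= addrC addrK.
  have HP' : Pd (c, Q').
    rewrite /Pd /= HQ' /= Hsum /lo.
    move: HlB (col_nbr Hvc); rewrite /lo /wt.
    by case: (col v); case: (col c) => //= H _; lra.
  have := Hmin _ HP'; rewrite /= Hcov.
  have : (#|B| <= #|cover Q|)%N by apply: subset_leq_card; apply: bigcup_sup.
  rewrite (cardsD1 c B) HcB; lia.
have HloW : lo v <= W.
  by rewrite /lo /W; case: (col v) => /=; lra.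
have [C HCQ HCs] : exists2 C : {set {set V}}, C \subset Q &
    (lo v <= \sum_(B in C) gs B) && (\sum_(B in C) gs B <= lo v + W).
  case: (lerP (lo v) 0) => Hl0.
    exists set0; first exact: sub0set.
    rewrite big_set0 Hl0 /= /lo /W.
    by case: (col v) => /=; lra.
  have [C HC /andP [HC1 HC2]] := subset_sum Hl0 Hsmall Hlo.
  exists C => //; rewrite HC1 /=.
  by move: HC2; rewrite mulr2n; lra.
have HCc : C \subset comps e v by apply: subset_trans HCQ HQ.
exists v, C; split => //.
move: HCs => /andP [HC1 HC2].
rewrite !cw_formula ?subsetDl // odd_card -/X -/a -/b.
have Hsplit : \sum_(B in comps e v :\: C) gs B =
    \sum_(B in comps e v) gs B - \sum_(B in C) gs B.
  by rewrite [in RHS](big_setID C (A := comps e v)) /= (setIidPr HCc) addrC addrK.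
rewrite Hsplit gs_compl -/X -/a -/b.
move: HC1 HC2; rewrite /lo /W /sg /wt.
by case: (col v) => /= HC1 HC2; split; lra.
Qed.


End Main.

Lemma final_col (col : V -> bool) (Hcol : forall r u, odd (dist e r u) = col r (+) col u)
  (Hbig : (#|~: [set u | col u]| <= #|[set u | col u]|)%N)
  (Hdeg : (#|V|.-1 <= #|~: [set u | col u]| * maxdeg e)%N)
  (Hn : (1 < #|V|)%N) :
  exists r : V, exists C1 : {set {set V}},
    C1 \subset comps e r /\
    let bound : rat :=
      (2%:R / 3%:R - 1 / (3%:R * (maxdeg e)%:R)) * #|V|%:R + 1 / 2%:R in
    ((class_weight e r C1)%:R <= bound) /\
    ((class_weight e r (comps e r :\: C1))%:R <= bound).
Proof.
have Hn0 : (0 < #|V|)%N by apply: ltnW.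
set D := maxdeg e in Hdeg *.
set nb := #|~: [set u | col u]| in Hdeg Hbig *.
set na := #|[set u | col u]| in Hbig *.
have Hnab : (na + nb = #|V|)%N by rewrite /na /nb cardsC.
have HD : (0 < D)%N.
  rewrite lt0n; apply/negP => /eqP HD0; rewrite HD0 muln0 in Hdeg; lia.
pose t : rat := 1 / (3%:R * D%:R).
have Ht0 : 0 <= t by rewrite /t divr_ge0 // mulr_ge0 // ler0n.
have Htd : t * (3%:R * D%:R) = 1.
  rewrite /t mul1r mulVf //; rewrite mulf_eq0 negb_or !pnatr_eq0 /=; lia.
have Hd1 : (1 : rat) <= D%:R by rewrite ler1n.
have Hnr : (#|V|%:R : rat) <= nb%:R * D%:R + 1.
  have : (#|V| <= nb * D + 1)%N by lia.
  by rewrite -(ler_nat rat) natrD natrM.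
have Habr : (na%:R + nb%:R = #|V|%:R :> rat) by rewrite -natrD Hnab.
have Hbar : (nb%:R <= na%:R :> rat) by rewrite ler_nat.
have HB2 : na%:R + #|V|%:R - 1 <= 3%:R * ((2%:R / 3%:R - t) * #|V|%:R + 1 / 2%:R).
  have H3t : 3%:R * t <= 1 by nra.
  have F1 : 3%:R * t * #|V|%:R <= nb%:R + 1.
    have := ler_wpM2l (_ : 0 <= 3%:R * t) Hnr.
    have -> : 3%:R * t * (nb%:R * D%:R + 1) = nb%:R * (t * (3%:R * D%:R)) + 3%:R * t by ring.
    rewrite Htd; move=> H; have : 3%:R * t * #|V|%:R <= nb%:R * 1 + 3%:R * t.
      by apply: H; nra.
    lra.
  lra.
have HB1 : nb%:R <= (2%:R / 3%:R - t) * #|V|%:R + 1 / 2%:R.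
  case: (leqP D 1) => HD1.
    have HD1' : D = 1%N by lia.
    have Hn2 : #|V| = 2%N by rewrite HD1' muln1 in Hdeg; lia.
    have Hnb1 : (nb <= 1)%N by lia.
    have Ht : t = 1 / 3%:R by rewrite /t HD1' mulr1.
    rewrite Ht Hn2; move: Hnb1; rewrite -(ler_nat rat) => Hnb1; lra.
  have Hd2 : (2 : rat) <= D%:R by rewrite ler_nat.
  have H6t : 6%:R * t <= 1 by nra.
  have Hnn : (0 : rat) <= #|V|%:R by rewrite ler0n.
  nra.
have := @main_core col Hcol ((2%:R / 3%:R - t) * #|V|%:R + 1 / 2%:R) HB1 HB2 Hbig Hn0.
by [].
Qed.

Lemma final_tree (Hn : (1 < #|V|)%N) :
  exists r : V, exists C1 : {set {set V}},
    C1 \subset comps e r /\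
    let bound : rat :=
      (2%:R / 3%:R - 1 / (3%:R * (maxdeg e)%:R)) * #|V|%:R + 1 / 2%:R in
    ((class_weight e r C1)%:R <= bound) /\
    ((class_weight e r (comps e r :\: C1))%:R <= bound).
Proof.
have Hn0 : (0 < #|V|)%N by apply: ltnW.
have [rho _] : exists rho : V, true by have /card_gt0P [x _] := Hn0; exists x.
have Hd0 := deg_count rho false; have Hd1 := deg_count rho true.
case: (ltnP #|[set u | odd (dist e rho u)]| #|~: [set u | odd (dist e rho u)]|) => Hlt.
  apply: (@final_col (fun u => ~~ odd (dist e rho u))) => //.
  - move=> r u; rewrite (parity_global rho).
    by case: (odd (dist e rho r)); case: (odd (dist e rho u)).
  - have -> : [set u | ~~ odd (dist e rho u)] = ~: [set u | odd (dist e rho u)].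
      by apply/setP => u; rewrite !inE.
    by rewrite setCK ltnW.
  - have -> : ~: [set u | ~~ odd (dist e rho u)] = [set u | odd (dist e rho u) == true].
      by apply/setP => u; rewrite !inE negbK eqb_id.
    exact: Hd1.
apply: (@final_col (fun u => odd (dist e rho u))) => //.
- exact: parity_global.
- have -> : ~: [set u | odd (dist e rho u)] = [set u | odd (dist e rho u) == false].
    by apply/setP => u; rewrite !inE eqbF_neg.
  exact: Hd0.
Qed.

End Tree.

Unset Implicit Arguments.
Local Open Scope ring_scope.

Theorem lemma7p3 (V : finType) (e : rel V) :
  is_tree e -> (1 < #|V|)%N ->
  exists r : V, exists C1 : {set {set V}},
    C1 \subset comps e r /\
    let bound : rat :=
      (2%:R / 3%:R - 1 / (3%:R * (maxdeg e)%:R)) * #|V|%:R + 1 / 2%:R in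
    ((class_weight e r C1)%:R <= bound) /\
    ((class_weight e r (comps e r :\: C1))%:R <= bound).
Proof.
case=> Hs Hi Hc Hnc Hn.
exact: (final_tree Hs Hi Hc Hnc Hn).
Qed.
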